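(* Let $R$ be the set of $\phi\in V$ that are not cohomologous to any locally constant function, i.e. there is no locally constant $\varphi$ and continuous $\psi:\Sigma_{\mathbf A}^+\to\mathbb C$ with $\phi-\varphi=\psi\circ\sigma_{\mathbf A}-\psi$. Then $R$ is residual in $V$: there exist open dense subsets $V_1,V_2,\dots$ of $V$ with $\bigcap_{m}V_m\subset R$.
   Context: Let $N\ge2$, $\mathbf A$ an $N\times N$ zero-one aperiodic matrix, $\Sigma_{\mathbf A}^+=\{\omega\in\{1,\dots,N\}^{\mathbb N\cup\{0\}}:\mathbf A(\omega_m\omega_{m+1})=1\ \forall m\}$ with left shift $\sigma_{\mathbf A}$. $\mathrm{var}_m(\phi)=\sup\{|\phi(\omega)-\phi(\omega')|:\omega_k=\omega'_k,\ 0\le k\le m-1\}$; $V=\{\phi:\Sigma_{\mathbf A}^+\to\mathbb C:\mathrm{var}_m(\phi)^{1/m}\to0\}$ with the topology generated by the norms $\|\phi\|_\theta=\|\phi\|_\infty+[\phi]_\theta$, $\theta\in(0,1)$, $[\phi]_\theta$ the Lipschitz constant w.r.t. $d_\theta(\omega,\omega')=\theta^{\min\{m:\omega_m\ne\omega'_m\}}$. A function is locally constant if $\mathrm{var}_m$ of it vanishes for some $m$. *)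

(* Defs.v *)
From Stdlib Require Import Reals Lra Lia List.
From Coquelicot Require Import Coquelicot.
Open Scope R_scope.

(* Alphabet {1,...,N} encoded as nat; A is given by its entries A i j for 1 <= i,j <= N. *)
Definition zero_one (N : nat) (A : nat -> nat -> nat) : Prop :=
  forall i j, (1 <= i <= N)%nat -> (1 <= j <= N)%nat -> A i j = 0%nat \/ A i j = 1%nat.

Fixpoint matpow (N : nat) (A : nat -> nat -> nat) (k : nat) (i j : nat) : nat :=
  match k with
  | O => if Nat.eqb i j then 1%nat else 0%nat
  | S k' => fold_right Nat.add 0%nat (map (fun l => (matpow N A k' i l * A l j)%nat) (seq 1 N))
  end.

Definition aperiodic (N : nat) (A : nat -> nat -> nat) : Prop :=
  exists M, (1 <= M)%nat /\
    forall i j, (1 <= i <= N)%nat -> (1 <= j <= N)%nat -> (0 < matpow N A M i j)%nat.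

Definition inSigma (N : nat) (A : nat -> nat -> nat) (w : nat -> nat) : Prop :=
  (forall m, (1 <= w m <= N)%nat) /\ (forall m, A (w m) (w (S m)) = 1%nat).

Definition Sigma (N : nat) (A : nat -> nat -> nat) : Type := { w : nat -> nat | inSigma N A w }.

Lemma inSigma_shift N A (w : nat -> nat) : inSigma N A w -> inSigma N A (fun m => w (S m)).
Proof. intros [H1 H2]; split; intros m; [apply H1 | apply H2]. Qed.

Definition shift {N A} (w : Sigma N A) : Sigma N A :=
  exist _ (fun m => proj1_sig w (S m)) (inSigma_shift N A _ (proj2_sig w)).

Definition agree {N A} (m : nat) (w w' : Sigma N A) : Prop :=
  forall k, (k < m)%nat -> proj1_sig w k = proj1_sig w' k.

Definition var {N A} (phi : Sigma N A -> C) (m : nat) : Rbar :=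
  Lub_Rbar (fun r => exists w w', agree m w w' /\ r = Cmod (Cminus (phi w) (phi w'))).

(* V : functions with var_m(phi)^(1/m) -> 0, i.e. for every eps > 0,
   eventually var_m(phi) <= eps^m *)
Definition inV {N A} (phi : Sigma N A -> C) : Prop :=
  forall eps, 0 < eps -> exists M, forall m, (M <= m)%nat -> Rbar_le (var phi m) (Finite (eps ^ m)).

Definition locally_constant {N A} (phi : Sigma N A -> C) : Prop :=
  exists m, var phi m = Finite 0.

(* continuity w.r.t. the product topology (cylinder neighbourhoods) *)
Definition continuousS {N A} (psi : Sigma N A -> C) : Prop :=
  forall w eps, 0 < eps -> exists m, forall w', agree m w w' -> Cmod (Cminus (psi w) (psi w')) < eps.

Definition supnorm {N A} (phi : Sigma N A -> C) : Rbar :=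
  Lub_Rbar (fun r => exists w, r = Cmod (phi w)).

(* [phi]_theta : Lipschitz constant for d_theta(w,w') = theta^n, n = first disagreement *)
Definition lipconst {N A} (theta : R) (phi : Sigma N A -> C) : Rbar :=
  Lub_Rbar (fun r => exists w w' n, agree n w w' /\ proj1_sig w n <> proj1_sig w' n /\
                                   r = Cmod (Cminus (phi w) (phi w')) / theta ^ n).

Definition normth {N A} (theta : R) (phi : Sigma N A -> C) : Rbar :=
  Rbar_plus (supnorm phi) (lipconst theta phi).

Definition in_nbhd {N A} (s : list R) (eps : R) (phi psi : Sigma N A -> C) : Prop :=
  inV psi /\ forall theta, In theta s -> Rbar_lt (normth theta (fun w => Cminus (psi w) (phi w))) (Finite eps).

Definition valid_thetas (s : list R) : Prop := forall theta, In theta s -> 0 < theta < 1.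

(* open subset of V in the topology generated by the norms ||.||_theta *)
Definition openV {N A} (U : (Sigma N A -> C) -> Prop) : Prop :=
  (forall phi, U phi -> inV phi) /\
  forall phi, U phi -> exists s eps, valid_thetas s /\ 0 < eps /\
    forall psi, in_nbhd s eps phi psi -> U psi.

Definition denseV {N A} (D : (Sigma N A -> C) -> Prop) : Prop :=
  forall phi, inV phi -> forall s eps, valid_thetas s -> 0 < eps ->
    exists psi, in_nbhd s eps phi psi /\ D psi.

Definition cohom_loc_const {N A} (phi : Sigma N A -> C) : Prop :=
  exists (vphi psi : Sigma N A -> C), locally_constant vphi /\ continuousS psi /\
    forall w, Cminus (phi w) (vphi w) = Cminus (psi (shift w)) (psi w).

Definition Rresid {N A} (phi : Sigma N A -> C) : Prop := inV phi /\ ~ cohom_loc_const phi.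

(* Main.v *)
Require Import Defs.
From Stdlib Require Import Reals Lra Lia List Arith.
From Stdlib Require Import Classical FunctionalExtensionality ProofIrrelevance.
From Coquelicot Require Import Coquelicot.
Open Scope R_scope.

Fixpoint SR (p : nat) (f : nat -> R) : R :=
  match p with O => 0 | S p => SR p f + f p end.

Lemma SR_ext p f g : (forall j, (j < p)%nat -> f j = g j) -> SR p f = SR p g.
Proof. induction p; simpl; intros H; auto. rewrite IHp, H; auto. Qed.

Lemma SR_plus p f g : SR p (fun j => f j + g j) = SR p f + SR p g.
Proof. induction p; simpl; [lra|]. rewrite IHp; lra. Qed.

Lemma SR_scal p c f : SR p (fun j => c * f j) = c * SR p f.
Proof. induction p; simpl; [lra|]. rewrite IHp; lra. Qed.

Lemma SR_minus p f g : SR p (fun j => f j - g j) = SR p f - SR p g.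
Proof. induction p; simpl; [lra|]. rewrite IHp; lra. Qed.

Lemma SR_split p q f : SR (p + q) f = SR p f + SR q (fun j => f (p + j)%nat).
Proof. induction q; simpl. rewrite Nat.add_0_r; lra. rewrite Nat.add_succ_r; simpl. rewrite IHq; lra. Qed.

Lemma SR_tele p h : SR p (fun j => h (S j) - h j) = h p - h O.
Proof. induction p; simpl; [lra|]. rewrite IHp; lra. Qed.

Lemma SR_bound p f d : (forall j, (j < p)%nat -> Rabs (f j) <= d) -> Rabs (SR p f) <= INR p * d.
Proof. induction p; cbn [SR]; intros H. rewrite Rabs_R0; simpl; lra.
  eapply Rle_trans; [apply Rabs_triang|]. rewrite S_INR.
  assert (Rabs (SR p f) <= INR p * d) by (apply IHp; auto). specialize (H p ltac:(lia)). lra. Qed.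

Lemma SR_nonneg p f : (forall j, (j < p)%nat -> 0 <= f j) -> 0 <= SR p f.
Proof. induction p; simpl; intros H; [lra|]. assert (0 <= SR p f) by (apply IHp; intros; apply H; lia). specialize (H p ltac:(lia)). lra. Qed.

Lemma SR_first p f : (forall j, (j < S p)%nat -> 0 <= f j) -> f O <= SR (S p) f.
Proof. induction p; simpl; intros H; [lra|]. simpl in IHp. assert (f O <= 0 + f O + SR p (fun _ => 0) * 0) by (simpl; lra).
  assert (f O <= SR (S p) f). { apply IHp; intros; apply H; lia. } simpl in H1. specialize (H (S p) ltac:(lia)). lra. Qed.

Lemma SR_zero p f : (forall j, (j < p)%nat -> f j = 0) -> SR p f = 0.
Proof. induction p; simpl; intros H; auto. rewrite IHp, H; auto; lra. Qed.

Fixpoint shiftn {N A} (j : nat) (x : Sigma N A) : Sigma N A :=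
  match j with O => x | S j => shift (shiftn j x) end.

Lemma shiftn_val {N A} j (x : Sigma N A) n : proj1_sig (shiftn j x) n = proj1_sig x (j + n)%nat.
Proof. revert n; induction j; intros n; simpl; auto. rewrite IHj. f_equal; lia. Qed.

Lemma sig_eq {N A} (x y : Sigma N A) : (forall n, proj1_sig x n = proj1_sig y n) -> x = y.
Proof. destruct x as [x Hx], y as [y Hy]; simpl; intros H.
  assert (x = y) by (apply functional_extensionality; auto). subst. f_equal; apply proof_irrelevance. Qed.

Lemma C_ext (x y : C) : fst x = fst y -> snd x = snd y -> x = y.
Proof. destruct x, y; simpl; intros; subst; auto. Qed.

Definition Orb {N A} (phi : Sigma N A -> C) (x : Sigma N A) (p : nat) : R :=
  SR p (fun j => fst (phi (shiftn j x))).

Lemma var_zero_fst {N A} (phi : Sigma N A -> C) m w w' :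
  Defs.var phi m = Finite 0 -> agree m w w' -> fst (phi w) = fst (phi w').
Proof. intros Hv Ha. unfold Defs.var in Hv. destruct (Lub_Rbar_correct (fun r => exists w w', agree m w w' /\ r = Cmod (Cminus (phi w) (phi w')))) as [Hub _].
  rewrite Hv in Hub. specialize (Hub (Cmod (Cminus (phi w) (phi w'))) (ex_intro _ w (ex_intro _ w' (conj Ha eq_refl)))).
  simpl in Hub. pose proof (re_le_Cmod (Cminus (phi w) (phi w'))). unfold Re in H. simpl in H.
  pose proof (Rabs_pos (fst (phi w) + - fst (phi w'))). 
  assert (Rabs (fst (phi w) + - fst (phi w')) = 0) by lra.
  apply Rabs_eq_0 in H1. lra. Qed.

Lemma first_diff (f g : nat -> nat) k : f k <> g k -> exists n, (forall i, (i < n)%nat -> f i = g i) /\ f n <> g n.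
Proof. induction k as [k IH] using (well_founded_induction lt_wf). intros H.
  destruct (classic (exists i, (i < k)%nat /\ f i <> g i)) as [[i [Hi Hne]]|Hno].
  - apply (IH i Hi Hne).
  - exists k; split; auto. intros i Hi. destruct (Nat.eq_dec (f i) (g i)); auto. exfalso; apply Hno; eauto. Qed.

Lemma fold_pos (f : nat -> nat) l : (0 < fold_right Nat.add 0 (map f l))%nat -> exists x, In x l /\ (0 < f x)%nat.
Proof. induction l as [|a l IH]; simpl; intros H; [lia|].
  destruct (f a) eqn:E. - simpl in H. destruct (IH H) as [x [Hx Hf]]; eauto.
  - exists a; split; auto; lia. Qed.

Lemma path_exists N A (H01 : zero_one N A) : forall k i j, (1 <= i <= N)%nat -> (1 <= j <= N)%nat ->
  (0 < matpow N A k i j)%nat -> exists P : nat -> nat, P O = i /\ P k = j /\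
   (forall l, (l < k)%nat -> A (P l) (P (S l)) = 1%nat) /\ (forall l, (l <= k)%nat -> (1 <= P l <= N)%nat).
Proof. induction k; intros i j Hi Hj Hp.
  - simpl in Hp. destruct (Nat.eqb_spec i j); [|lia]. subst. exists (fun _ => j). repeat split; intros; try lia.
  - cbn [matpow] in Hp. apply fold_pos in Hp. destruct Hp as [l [Hl Hp]]. apply in_seq in Hl.
    assert (Hlr : (1 <= l <= N)%nat) by lia.
    destruct (H01 l j Hlr Hj) as [E|E]; rewrite E in Hp; [rewrite Nat.mul_0_r in Hp; lia|].
    rewrite Nat.mul_1_r in Hp. destruct (IHk i l Hi Hlr Hp) as [P [H0 [Hk [Ha Hr]]]].
    exists (fun n => if Nat.eqb n (S k) then j else P n). split; [|split; [|split]].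
    + simpl. auto.
    + rewrite Nat.eqb_refl. auto.
    + intros l' Hl'. destruct (Nat.eqb_spec l' (S k)); [lia|]. destruct (Nat.eqb_spec (S l') (S k)).
      * replace l' with k by lia. rewrite Hk. auto.
      * apply Ha; lia.
    + intros l' Hl'. destruct (Nat.eqb_spec l' (S k)); [auto|]. apply Hr; lia.
Qed.

Definition good_paths N (A : nat -> nat -> nat) (M : nat) (P : nat -> nat -> nat) : Prop :=
  (1 <= M)%nat /\ (forall t k, (k <= M)%nat -> (1 <= P t k <= N)%nat) /\
  (forall t k, (k < M)%nat -> A (P t k) (P t (S k)) = 1%nat) /\
  P O O = 1%nat /\ P O M = 1%nat /\ P 1%nat O = 1%nat /\ P 1%nat M = 2%nat /\ P 2%nat O = 2%nat /\ P 2%nat M = 1%nat.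

Lemma good_paths_exist N A (HN : (2 <= N)%nat) (H01 : zero_one N A) (Hap : aperiodic N A) :
  exists M P, good_paths N A M P.
Proof. destruct Hap as [M [HM Hpos]].
  destruct (path_exists N A H01 M 1 1 ltac:(lia) ltac:(lia) (Hpos 1%nat 1%nat ltac:(lia) ltac:(lia))) as [P11 [a1 [a2 [a3 a4]]]].
  destruct (path_exists N A H01 M 1 2 ltac:(lia) ltac:(lia) (Hpos 1%nat 2%nat ltac:(lia) ltac:(lia))) as [P12 [b1 [b2 [b3 b4]]]].
  destruct (path_exists N A H01 M 2 1 ltac:(lia) ltac:(lia) (Hpos 2%nat 1%nat ltac:(lia) ltac:(lia))) as [P21 [c1 [c2 [c3 c4]]]].
  exists M, (fun t => match t with O => P11 | 1%nat => P12 | _ => P21 end).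
  unfold good_paths. split; [lia|]. split.
  { intros [|[|t]] k' Hk'; [apply a4|apply b4|apply c4]; lia. }
  split. { intros [|[|t]] k' Hk'; auto. }
  repeat split; auto.
Qed.

Definition ptf (M : nat) (P : nat -> nat -> nat) (typ : nat -> nat) : nat -> nat :=
  fun n => P (typ (n / M)%nat) (n mod M)%nat.

Lemma divmod_of (n M q c : nat) : (c < M)%nat -> n = (M * q + c)%nat -> (n / M = q /\ n mod M = c)%nat.
Proof. intros Hc Hn. split; [symmetry; eapply Nat.div_unique; eauto | symmetry; eapply Nat.mod_unique; eauto]. Qed.

Lemma ptf_valid N A M P typ : good_paths N A M P -> (forall b, P (typ b) M = P (typ (S b)) O) ->
  inSigma N A (ptf M P typ).
Proof. intros [HM [Hr [Ha _]]] Hc. split; intros n; unfold ptf.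
  - apply Hr. pose proof (Nat.mod_upper_bound n M ltac:(lia)). lia.
  - pose proof (Nat.div_mod n M ltac:(lia)) as Hd. pose proof (Nat.mod_upper_bound n M ltac:(lia)) as Hu.
    set (q := (n / M)%nat) in *. set (c := (n mod M)%nat) in *.
    destruct (Nat.ltb_spec (S c) M).
    + destruct (divmod_of (S n) M q (S c)) as [E1 E2]; try lia. rewrite E1, E2. apply Ha; lia.
    + destruct (divmod_of (S n) M (S q) O) as [E1 E2]; try lia. rewrite E1, E2. rewrite <- Hc.
      pose proof (Ha (typ q) c ltac:(lia)) as X. replace (S c) with M in X by lia. exact X.
Qed.

Definition typ (K s b : nat) : nat :=
  let c := (b mod K)%nat in if Nat.eqb c s then 1%nat else if Nat.eqb c (S s) then 2%nat else O.

Lemma modS (b K : nat) : K <> O -> (S b mod K = if Nat.ltb (S (b mod K)) K then S (b mod K) else O)%nat.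
Proof. intros HK. pose proof (Nat.div_mod b K HK) as Hd. pose proof (Nat.mod_upper_bound b K HK) as Hu.
  destruct (Nat.ltb_spec (S (b mod K)) K).
  - apply (divmod_of (S b) K (b / K) (S (b mod K))); lia.
  - apply (divmod_of (S b) K (S (b / K)) O); lia. Qed.

Lemma typ_cons N A M P K s : good_paths N A M P -> K <> O -> ((S s < K)%nat \/ (K <= s)%nat) ->
  forall b, P (typ K s b) M = P (typ K s (S b)) O.
Proof. intros (HM & _ & _ & e1 & e2 & e3 & e4 & e5 & e6) HK Hs b. unfold typ.
  rewrite (modS b K HK). pose proof (Nat.mod_upper_bound b K HK).
  set (c := (b mod K)%nat) in *.
  destruct (Nat.ltb_spec (S c) K);
  repeat match goal with |- context [Nat.eqb ?x ?y] => destruct (Nat.eqb_spec x y) end;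
  try lia; congruence.
Qed.

Definition Bm (m : nat) : nat := (m + 2)%nat.
Definition xUf M P m := ptf M P (typ (Bm m) (Bm m)).
Definition xVf M P m := ptf M P (typ (Bm m) m).
Definition xUVf M P m := ptf M P (typ (2 * Bm m) (Bm m + m)).

Lemma xU_valid N A M P (H : good_paths N A M P) m : inSigma N A (xUf M P m).
Proof. apply ptf_valid; auto. apply (typ_cons N A M P); unfold Bm; auto; lia. Qed.
Lemma xV_valid N A M P (H : good_paths N A M P) m : inSigma N A (xVf M P m).
Proof. apply ptf_valid; auto. apply (typ_cons N A M P); unfold Bm; auto; lia. Qed.
Lemma xUV_valid N A M P (H : good_paths N A M P) m : inSigma N A (xUVf M P m).
Proof. apply ptf_valid; auto. apply (typ_cons N A M P); unfold Bm; auto; lia. Qed.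

Definition xU {N A M P} (H : good_paths N A M P) m : Sigma N A := exist _ (xUf M P m) (xU_valid N A M P H m).
Definition xV {N A M P} (H : good_paths N A M P) m : Sigma N A := exist _ (xVf M P m) (xV_valid N A M P H m).
Definition xUV {N A M P} (H : good_paths N A M P) m : Sigma N A := exist _ (xUVf M P m) (xUV_valid N A M P H m).

Lemma typ_per K s q : K <> O -> typ K s (q + K) = typ K s q.
Proof. intros HK. unfold typ. pose proof (Nat.div_mod q K HK). pose proof (Nat.mod_upper_bound q K HK).
  destruct (divmod_of (q + K) K (S (q / K)) (q mod K)) as [_ E]; try lia. rewrite E; auto. Qed.

Lemma ptf_per M P K s n : (1 <= M)%nat -> K <> O ->
  ptf M P (typ K s) (n + K * M) = ptf M P (typ K s) n.
Proof. intros HM HK. unfold ptf. pose proof (Nat.div_mod n M ltac:(lia)). pose proof (Nat.mod_upper_bound n M ltac:(lia)).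
  destruct (divmod_of (n + K * M) M (n / M + K) (n mod M)) as [E1 E2]; try lia.
  rewrite E1, E2, typ_per; auto. Qed.

Lemma F1 M P m n : (1 <= M)%nat -> (n < (Bm m + m) * M)%nat -> xUVf M P m n = xUf M P m n.
Proof. intros HM Hn. unfold xUVf, xUf, ptf. pose proof (Nat.div_mod n M ltac:(lia)). pose proof (Nat.mod_upper_bound n M ltac:(lia)).
  set (q := (n / M)%nat) in *. set (c := (n mod M)%nat) in *.
  assert (Hq : (q < Bm m + m)%nat) by nia. f_equal. unfold typ, Bm in *.
  rewrite (Nat.mod_small q (2 * (m+2))) by lia.
  pose proof (Nat.mod_upper_bound q (m+2) ltac:(lia)).
  repeat match goal with |- context [Nat.eqb ?x ?y] => destruct (Nat.eqb_spec x y) end; lia. Qed.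

Lemma F2 M P m n : (1 <= M)%nat -> (n < (Bm m + m) * M)%nat -> xUVf M P m (Bm m * M + n) = xVf M P m n.
Proof. intros HM Hn. unfold xUVf, xVf, ptf. pose proof (Nat.div_mod n M ltac:(lia)). pose proof (Nat.mod_upper_bound n M ltac:(lia)).
  set (q := (n / M)%nat) in *. set (c := (n mod M)%nat) in *.
  assert (Hq : (q < Bm m + m)%nat) by nia.
  destruct (divmod_of (Bm m * M + n) M (Bm m + q) c) as [E1 E2]; try lia. rewrite E1, E2. f_equal.
  unfold typ, Bm in *.
  destruct (Nat.ltb_spec q (m+2)).
  - rewrite (Nat.mod_small q (m+2)) by lia. rewrite (Nat.mod_small (m + 2 + q) (2 * (m+2))) by lia.
    repeat match goal with |- context [Nat.eqb ?x ?y] => destruct (Nat.eqb_spec x y) end; lia.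
  - destruct (divmod_of q (m+2) 1 (q - (m+2))) as [_ E3]; try lia.
    destruct (divmod_of (m + 2 + q) (2 * (m+2)) 1 (q - (m+2))) as [_ E4]; try lia.
    rewrite E3, E4.
    repeat match goal with |- context [Nat.eqb ?x ?y] => destruct (Nat.eqb_spec x y) end; lia. Qed.

Lemma V1 N A M P m : good_paths N A M P -> xUVf M P m (S m * M) = 1%nat.
Proof. intros (HM & _ & _ & e1 & e2 & e3 & e4 & e5 & e6). unfold xUVf, ptf.
  destruct (divmod_of (S m * M) M (S m) O) as [E1 E2]; try lia. rewrite E1, E2.
  unfold typ, Bm. rewrite Nat.mod_small by lia.
  repeat match goal with |- context [Nat.eqb ?x ?y] => destruct (Nat.eqb_spec x y) end; try lia. Qed.

Lemma V2 N A M P m : good_paths N A M P -> xUVf M P m ((Bm m + S m) * M) = 2%nat.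
Proof. intros (HM & _ & _ & e1 & e2 & e3 & e4 & e5 & e6). unfold xUVf, ptf.
  destruct (divmod_of ((Bm m + S m) * M) M (Bm m + S m) O) as [E1 E2]; try lia. rewrite E1, E2.
  unfold typ, Bm. rewrite Nat.mod_small by lia.
  repeat match goal with |- context [Nat.eqb ?x ?y] => destruct (Nat.eqb_spec x y) end; try lia. Qed.

Definition am M m := (Bm m * M)%nat.

Definition Lr {N A M P} (H : good_paths N A M P) m (phi : Sigma N A -> C) : R :=
  Orb phi (xUV H m) (2 * am M m) - Orb phi (xU H m) (am M m) - Orb phi (xV H m) (am M m).

Lemma HM_of {N A M P} (H : good_paths N A M P) : (1 <= M)%nat.
Proof. destruct H; auto. Qed.

Lemma perU {N A M P} (H : good_paths N A M P) m : shiftn (am M m) (xU H m) = xU H m.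
Proof. apply sig_eq; intros n. rewrite shiftn_val. change (xUf M P m (am M m + n) = xUf M P m n).
  unfold xUf, am. rewrite Nat.add_comm.
  apply ptf_per; [apply (HM_of H)|unfold Bm; lia]. Qed.
Lemma perV {N A M P} (H : good_paths N A M P) m : shiftn (am M m) (xV H m) = xV H m.
Proof. apply sig_eq; intros n. rewrite shiftn_val. change (xVf M P m (am M m + n) = xVf M P m n).
  unfold xVf, am. rewrite Nat.add_comm.
  apply ptf_per; [apply (HM_of H)|unfold Bm; lia]. Qed.
Lemma perUV {N A M P} (H : good_paths N A M P) m : shiftn (2 * am M m) (xUV H m) = xUV H m.
Proof. apply sig_eq; intros n. rewrite shiftn_val. change (xUVf M P m (2 * am M m + n) = xUVf M P m n).
  replace (2 * am M m + n)%nat with (n + (2 * Bm m) * M)%nat by (unfold am; lia). unfold xUVf.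
  apply ptf_per; [apply (HM_of H)|unfold Bm; lia]. Qed.

Lemma Orb_cob {N A} (phi vphi psi : Sigma N A -> C) x p :
  (forall w, Cminus (phi w) (vphi w) = Cminus (psi (shift w)) (psi w)) -> shiftn p x = x ->
  Orb phi x p = Orb vphi x p.
Proof. intros Heq Hp. unfold Orb.
  rewrite (SR_ext p _ (fun j => fst (vphi (shiftn j x)) + (fst (psi (shiftn (S j) x)) - fst (psi (shiftn j x))))).
  - rewrite SR_plus, (SR_tele p (fun j => fst (psi (shiftn j x)))). rewrite Hp. simpl. lra.
  - intros j _. pose proof (f_equal fst (Heq (shiftn j x))) as E. simpl in E. simpl. lra. Qed.

Lemma L_cohom {N A M P} (H : good_paths N A M P) m (phi vphi psi : Sigma N A -> C) :
  Defs.var vphi m = Finite 0 ->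
  (forall w, Cminus (phi w) (vphi w) = Cminus (psi (shift w)) (psi w)) -> Lr H m phi = 0.
Proof. intros Hv Heq. pose proof (HM_of H) as HM. unfold Lr.
  rewrite (Orb_cob phi vphi psi _ _ Heq (perUV H m)), (Orb_cob phi vphi psi _ _ Heq (perU H m)),
    (Orb_cob phi vphi psi _ _ Heq (perV H m)).
  unfold Orb. replace (2 * am M m)%nat with (am M m + am M m)%nat by lia. rewrite SR_split.
  rewrite (SR_ext (am M m) (fun j => fst (vphi (shiftn j (xUV H m)))) (fun j => fst (vphi (shiftn j (xU H m))))).
  rewrite (SR_ext (am M m) (fun j => fst (vphi (shiftn (am M m + j) (xUV H m)))) (fun j => fst (vphi (shiftn j (xV H m))))).
  lra.
  - intros j Hj. apply (var_zero_fst vphi m); auto. intros k Hk. rewrite !shiftn_val. simpl.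
    replace (am M m + j + k)%nat with (Bm m * M + (j + k))%nat by (unfold am; lia).
    apply F2; auto. unfold am in Hj. nia.
  - intros j Hj. apply (var_zero_fst vphi m); auto. intros k Hk. rewrite !shiftn_val. simpl.
    apply F1; auto. unfold am in Hj. nia.
Qed.

Definition gr {N A M P} (H : good_paths N A M P) m (w : Sigma N A) : R :=
  if forallb (fun k => Nat.eqb (proj1_sig w k) (xUVf M P m k)) (seq 0 (2 * am M m)) then 1 else 0.

Lemma forallb_seq (f : nat -> bool) n : forallb f (seq 0 n) = true <-> forall k, (k < n)%nat -> f k = true.
Proof. rewrite forallb_forall. split; intros Hf k Hk; apply Hf; apply in_seq in Hk || apply in_seq; lia. Qed.

Lemma gr_local {N A M P} (H : good_paths N A M P) m w w' : agree (2 * am M m) w w' -> gr H m w = gr H m w'.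
Proof. intros Ha. unfold gr.
  destruct (forallb _ (seq 0 (2 * am M m))) eqn:E1; destruct (forallb (fun k => Nat.eqb (proj1_sig w' k) _) _) eqn:E2; auto.
  - rewrite forallb_seq in E1. apply Bool.not_true_iff_false in E2. exfalso; apply E2. apply forallb_seq.
    intros k Hk. rewrite <- (Ha k Hk). auto.
  - rewrite forallb_seq in E2. apply Bool.not_true_iff_false in E1. exfalso; apply E1. apply forallb_seq.
    intros k Hk. rewrite (Ha k Hk). auto.
Qed.

Lemma gr_01 {N A M P} (H : good_paths N A M P) m w : gr H m w = 0 \/ gr H m w = 1.
Proof. unfold gr. destruct forallb; auto. Qed.

Lemma distinct_aux {N A M P} (H : good_paths N A M P) m (y : nat -> nat) j :
  (forall n, y (n + am M m)%nat = y n) ->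
  (forall k, (k < 2 * am M m)%nat -> Nat.eqb (y (j + k)%nat) (xUVf M P m k) = true) -> False.
Proof. intros Hy Hf. pose proof (HM_of H) as HM.
  pose proof (Hf (S m * M)%nat ltac:(unfold am, Bm; nia)) as h0.
  pose proof (Hf ((Bm m + S m) * M)%nat ltac:(unfold am, Bm; nia)) as h1.
  apply Nat.eqb_eq in h0, h1. rewrite (V1 N A M P m H) in h0. rewrite (V2 N A M P m H) in h1.
  replace (j + (Bm m + S m) * M)%nat with ((j + S m * M) + am M m)%nat in h1 by (unfold am; lia).
  rewrite Hy in h1. lia. Qed.

Lemma gr_U {N A M P} (H : good_paths N A M P) m j : gr H m (shiftn j (xU H m)) = 0.
Proof. unfold gr. destruct forallb eqn:E; auto. exfalso.
  apply (distinct_aux H m (xUf M P m) j).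
  - intros n. unfold xUf, am. apply ptf_per; [apply (HM_of H)|unfold Bm; lia].
  - rewrite forallb_seq in E. intros k Hk. specialize (E k Hk). rewrite shiftn_val in E. exact E. Qed.

Lemma gr_V {N A M P} (H : good_paths N A M P) m j : gr H m (shiftn j (xV H m)) = 0.
Proof. unfold gr. destruct forallb eqn:E; auto. exfalso.
  apply (distinct_aux H m (xVf M P m) j).
  - intros n. unfold xVf, am. apply ptf_per; [apply (HM_of H)|unfold Bm; lia].
  - rewrite forallb_seq in E. intros k Hk. specialize (E k Hk). rewrite shiftn_val in E. exact E. Qed.

Lemma gr_UV {N A M P} (H : good_paths N A M P) m : gr H m (xUV H m) = 1.
Proof. unfold gr. replace (forallb _ _) with true; auto. symmetry. apply forallb_seq. intros k _. apply Nat.eqb_refl. Qed.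

Lemma Lr_g {N A M P} (H : good_paths N A M P) m : 1 <= Lr H m (fun w => RtoC (gr H m w)).
Proof. pose proof (HM_of H) as HM.
  assert (Hp: exists p, (2 * am M m)%nat = S p) by (exists (2*am M m - 1)%nat; unfold am, Bm; nia).
  destruct Hp as [p E]. unfold Lr, Orb. rewrite E. simpl.
  rewrite (SR_zero (am M m) (fun j => gr H m (shiftn j (xU H m)))) by (intros; apply gr_U).
  rewrite (SR_zero (am M m) (fun j => gr H m (shiftn j (xV H m)))) by (intros; apply gr_V).
  pose proof (SR_first p (fun j => gr H m (shiftn j (xUV H m)))) as X. simpl in X.
  rewrite gr_UV in X. cut (1 <= SR p (fun j => gr H m (shiftn j (xUV H m))) + gr H m (shiftn p (xUV H m))). lra.
  apply X. intros j _. destruct (gr_01 H m (shiftn j (xUV H m))); lra. Qed.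

Lemma Lub_le (E : R -> Prop) b : (forall x, E x -> x <= b) -> Rbar_le (Lub_Rbar E) (Finite b).
Proof. intros Hb. destruct (Lub_Rbar_correct E) as [_ Hl]. apply Hl. intros x Hx. simpl. auto. Qed.

Lemma Lub_ge (E : R -> Prop) x : E x -> Rbar_le (Finite x) (Lub_Rbar E).
Proof. intros Hx. destruct (Lub_Rbar_correct E) as [Hu _]. apply Hu; auto. Qed.

Lemma pow_dec (th : R) n d : 0 <= th <= 1 -> th ^ (n + d) <= th ^ n.
Proof. intros Hth. induction d. rewrite Nat.add_0_r; lra.
  rewrite Nat.add_succ_r. simpl. pose proof (pow_le th (n + d) ltac:(lra)). nra. Qed.

Lemma Cminus_self (a : C) : Cmod (Cminus a a) = 0.
Proof. replace (Cminus a a) with (RtoC 0). rewrite Cmod_R, Rabs_R0; auto.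
  apply C_ext; simpl; lra. Qed.

Lemma Cmod_minus_le (a b : C) t : Cmod a <= t -> Cmod b <= t -> Cmod (Cminus a b) <= 2 * t.
Proof. intros. unfold Cminus. eapply Rle_trans; [apply Cmod_triangle|]. rewrite Cmod_opp. lra. Qed.

Lemma normth_bound {N A} (th t : R) K (f : Sigma N A -> C) : 0 < th < 1 -> 0 <= t ->
  (forall w, Cmod (f w) <= t) -> (forall w w', agree K w w' -> f w = f w') ->
  Rbar_le (normth th f) (Finite (t + 2 * t / th ^ K)).
Proof. intros Hth Ht Hf Hl. unfold normth.
  replace (Finite (t + 2 * t / th ^ K)) with (Rbar_plus (Finite t) (Finite (2 * t / th ^ K))) by reflexivity.
  pose proof (pow_lt th K ltac:(lra)) as HK.
  apply Rbar_plus_le_compat.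
  - apply Lub_le. intros x [w ->]. auto.
  - apply Lub_le. intros x [w [w' [n [Ha [Hn ->]]]]].
    pose proof (pow_lt th n ltac:(lra)) as Hn'.
    destruct (Nat.le_gt_cases K n) as [HKn|HKn].
    + rewrite (Hl w w'). rewrite Cminus_self. unfold Rdiv. rewrite Rmult_0_l.
      apply Rmult_le_pos; [lra|]. left; apply Rinv_0_lt_compat; auto.
      intros k Hk; apply Ha; lia.
    + pose proof (Cmod_minus_le (f w) (f w') t (Hf w) (Hf w')) as Hc.
      pose proof (pow_dec th n (K - n) ltac:(lra)) as Hp. replace (n + (K - n))%nat with K in Hp by lia.
      pose proof (Rinv_le_contravar _ _ HK Hp) as Hi.
      pose proof (Cmod_ge_0 (Cminus (f w) (f w'))).
      unfold Rdiv. apply Rle_trans with (2 * t * / th ^ n).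
      * apply Rmult_le_compat_r; [left; apply Rinv_0_lt_compat; auto | auto].
      * apply Rmult_le_compat_l; [lra|auto].
Qed.

Lemma sup_of_normth {N A} (th e : R) (f : Sigma N A -> C) : 0 < th ->
  (exists (w w' : Sigma N A) n, agree n w w' /\ proj1_sig w n <> proj1_sig w' n) ->
  Rbar_lt (normth th f) (Finite e) -> forall w, Cmod (f w) < e.
Proof. intros Hth [w1 [w2 [n [Ha Hn]]]] Hlt w. unfold normth in Hlt.
  assert (H0 : Rbar_le (Finite 0) (lipconst th f)).
  { eapply Rbar_le_trans; [|apply Lub_ge; exists w1, w2, n; split; [exact Ha|split; [exact Hn|reflexivity]]].
    simpl. apply Rmult_le_pos; [apply Cmod_ge_0|left; apply Rinv_0_lt_compat; apply pow_lt; auto]. }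
  assert (H1 : Rbar_le (Finite (Cmod (f w))) (supnorm f)) by (apply Lub_ge; exists w; auto).
  destruct (supnorm f) as [s| |]; destruct (lipconst th f) as [l| |]; simpl in *; try lra; try tauto.
Qed.

Lemma inV_add {N A} (phi f : Sigma N A -> C) K : inV phi -> (forall w w', agree K w w' -> f w = f w') ->
  inV (fun w => Cplus (phi w) (f w)).
Proof. intros Hphi Hf eps He. destruct (Hphi eps He) as [M0 HM0]. exists (max M0 K). intros m Hm.
  unfold Defs.var. erewrite Lub_Rbar_eqset. apply (HM0 m); lia.
  intros x; split; intros [w [w' [Ha ->]]]; exists w, w'; split; auto;
  (assert (E : f w = f w') by (apply Hf; intros k Hk; apply Ha; lia));
  f_equal; apply C_ext; simpl; rewrite E; lra.
Qed.

Lemma small_t (s : list R) K eps : valid_thetas s -> 0 < eps ->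
  exists t0, 0 < t0 /\ forall th, In th s -> forall t, 0 < t <= t0 -> t + 2 * t / th ^ K < eps.
Proof. induction s as [|th s IH]; intros Hs He.
  - exists 1; split; [lra|]. intros th [].
  - destruct IH as [t1 [Ht1 H1]]. { intros x Hx; apply Hs; right; auto. } auto.
    assert (Hth : 0 < th < 1) by (apply Hs; left; auto).
    pose proof (pow_lt th K ltac:(lra)) as Hp.
    set (c := 1 + 2 / th ^ K).
    assert (Hc : 1 <= c) by (unfold c; assert (0 <= 2 / th ^ K) by (apply Rdiv_le_0_compat; lra); lra).
    exists (Rmin t1 (eps / (2 * c))). split.
    + apply Rmin_glb_lt; auto. apply Rdiv_lt_0_compat; lra.
    + intros th' [<-|Hin] t Ht.
      * assert (E : t + 2 * t / th ^ K = t * c) by (unfold c; field; lra). rewrite E.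
        assert (t <= eps / (2 * c)) by (eapply Rle_trans; [apply Ht|apply Rmin_r]).
        assert (t * c <= eps / (2 * c) * c) by (apply Rmult_le_compat_r; lra).
        replace (eps / (2 * c) * c) with (eps / 2) in H0 by (field; lra). lra.
      * apply H1; auto. split; [lra|]. eapply Rle_trans; [apply Ht|apply Rmin_l].
Qed.

Lemma Orb_lin {N A} (phi : Sigma N A -> C) (g : Sigma N A -> R) t x p :
  Orb (fun w => Cplus (phi w) (RtoC (t * g w))) x p = Orb phi x p + t * Orb (fun w => RtoC (g w)) x p.
Proof. unfold Orb. simpl.
  rewrite (SR_plus p (fun j => fst (phi (shiftn j x))) (fun j => t * g (shiftn j x))).
  rewrite (SR_scal p t (fun j => g (shiftn j x))). auto. Qed.

Lemma Orb_diff {N A} (psi phi : Sigma N A -> C) x p e :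
  (forall w, Cmod (Cminus (psi w) (phi w)) < e) -> Rabs (Orb psi x p - Orb phi x p) <= INR p * e.
Proof. intros Hb. unfold Orb. rewrite <- SR_minus. apply SR_bound. intros j _.
  pose proof (re_le_Cmod (Cminus (psi (shiftn j x)) (phi (shiftn j x)))) as X. unfold Re in X. simpl in X.
  specialize (Hb (shiftn j x)). unfold Rminus. lra. Qed.

Lemma two_points {N A M P} (H : good_paths N A M P) :
  exists (w w' : Sigma N A) n, agree n w w' /\ proj1_sig w n <> proj1_sig w' n.
Proof. pose proof (HM_of H) as HM.
  assert (D : xUf M P 0 (3 * M)%nat <> xUVf M P 0 (3 * M)%nat).
  { pose proof (V2 N A M P 0 H) as E2. replace ((Bm 0 + 1) * M)%nat with (3 * M)%nat in E2 by (unfold Bm; lia).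
    rewrite E2.
    replace (3 * M)%nat with (M + Bm 0 * M)%nat by (unfold Bm; lia). unfold xUf at 1. rewrite ptf_per by (auto; unfold Bm; lia).
    fold (xUf M P 0). rewrite <- F1 by (auto; unfold Bm; lia).
    pose proof (V1 N A M P 0 H) as E1. replace (1 * M)%nat with M in E1 by lia. rewrite E1. lia. }
  destruct (first_diff _ _ _ D) as [n [Ha Hn]].
  exists (xU H 0), (xUV H 0), n. split; auto. Qed.

Theorem theoremB2 (N : nat) (A : nat -> nat -> nat)
  (HN : (2 <= N)%nat) (H01 : zero_one N A) (Hap : aperiodic N A) :
  exists Vm : nat -> (Sigma N A -> C) -> Prop,
    (forall m, openV (Vm m) /\ denseV (Vm m)) /\
    (forall phi, (forall m, Vm m phi) -> Rresid phi).
Proof.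
  destruct (good_paths_exist N A HN H01 Hap) as [M [P H]].
  pose proof (HM_of H) as HM.
  exists (fun m phi => inV phi /\ Lr H m phi <> 0). split.
  - intros m. split.
    + split. { intros phi [Hv _]; auto. }
      intros phi [Hv HL].
      assert (Hpos : 0 < Rabs (Lr H m phi)) by (apply Rabs_pos_lt; auto).
      pose proof (pos_INR (am M m)) as Ha.
      set (e := Rabs (Lr H m phi) / (4 * INR (am M m) + 1)).
      assert (He : 0 < e) by (unfold e; apply Rdiv_lt_0_compat; lra).
      exists (cons (/2) nil), e. split; [|split; auto].
      { intros th [<-|[]]. lra. }
      intros psi [Hpsi Hn]. split; auto.
      specialize (Hn (/2) (or_introl eq_refl)).
      pose proof (sup_of_normth (/2) e _ ltac:(lra) (two_points H) Hn) as Hb.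
      pose proof (Orb_diff psi phi (xUV H m) (2 * am M m) e Hb) as B1.
      pose proof (Orb_diff psi phi (xU H m) (am M m) e Hb) as B2.
      pose proof (Orb_diff psi phi (xV H m) (am M m) e Hb) as B3.
      rewrite mult_INR in B1. simpl (INR 2) in B1.
      apply Rabs_le_between in B1, B2, B3.
      assert (Ee : e * (4 * INR (am M m) + 1) = Rabs (Lr H m phi)) by (unfold e; field; lra).
      unfold Lr in *. intros Z.
      destruct (Rabs_le_between (Orb phi (xUV H m) (2 * am M m) - Orb phi (xU H m) (am M m) - Orb phi (xV H m) (am M m)) (Rabs (Lr H m phi))) as [X _].
      unfold Lr in X. specialize (X (Rle_refl _)).
      apply Rabs_le_between in X.
      revert Ee Hpos. unfold Lr. intros Ee Hpos.
      destruct (Rcase_abs (Orb phi (xUV H m) (2 * am M m) - Orb phi (xU H m) (am M m) - Orb phi (xV H m) (am M m))) as [c|c];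
      [rewrite Rabs_left in Ee, Hpos by exact c | rewrite Rabs_right in Ee, Hpos by exact c]; nra.
    + intros phi Hphi s eps Hs He.
      destruct (small_t s (2 * am M m) eps Hs He) as [t0 [Ht0 Hsm]].
      pose proof (Lr_g H m) as HLg.
      set (Lg := Lr H m (fun w => RtoC (gr H m w))) in *.
      assert (Hgen : forall t, 0 < t <= t0 ->
        in_nbhd s eps phi (fun w => Cplus (phi w) (RtoC (t * gr H m w))) /\
        Lr H m (fun w => Cplus (phi w) (RtoC (t * gr H m w))) = Lr H m phi + t * Lg).
      { intros t Ht. split.
        - split.
          + apply (inV_add phi (fun w => RtoC (t * gr H m w)) (2 * am M m)); auto.
            intros w w' Hw. rewrite (gr_local H m w w' Hw). auto.
          + intros th Hth. eapply Rbar_le_lt_trans.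
            * apply (normth_bound th t (2 * am M m)); [apply Hs; auto| lra | |].
              -- intros w. replace (Cminus (Cplus (phi w) (RtoC (t * gr H m w))) (phi w)) with (RtoC (t * gr H m w))
                   by (apply C_ext; simpl; lra).
                 rewrite Cmod_R. destruct (gr_01 H m w) as [E|E]; rewrite E;
                 [rewrite Rmult_0_r, Rabs_R0 | rewrite Rmult_1_r, Rabs_right]; lra.
              -- intros w w' Hw. rewrite (gr_local H m w w' Hw). apply C_ext; simpl; lra.
            * simpl. apply Hsm; auto.
        - unfold Lr. rewrite !Orb_lin. unfold Lg, Lr. ring. }
      destruct (Req_dec (Lr H m phi + t0 * Lg) 0) as [Z|Z].
      * destruct (Hgen (t0 / 2) ltac:(lra)) as [Hn HL]. eexists; split; [exact Hn|].
        split; [apply Hn|]. rewrite HL. nra.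
      * destruct (Hgen t0 ltac:(lra)) as [Hn HL]. eexists; split; [exact Hn|].
        split; [apply Hn|]. rewrite HL. auto.
  - intros phi Hall. split; [apply (Hall O)|].
    intros [vphi [psi [[m0 Hm0] [_ Heq]]]]. destruct (Hall m0) as [_ HL]. apply HL.
    eapply L_cohom; eauto.
Qed.
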